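(* Let $0<\delta<1$, $t>1$, $\lambda_c:=1/(t^{1-\delta}-1)$, $\lambda_c\le\lambda\le t^{1-\delta}-1$, let $0<k<t^{\delta-1}$, and let $\phi$ satisfy $0<\phi<\pi/2$ if $\ln\lambda\ge0$ and $0<\phi<\arctan(\pi/|\ln\lambda|)$ if $\ln\lambda<0$. For $z$ on the contour $\{z=1-k+R{\rm e}^{{\rm i}\phi}:0\le R<\infty\}$, $$\left|\frac{\partial F}{\partial z}(z;\lambda)\right|>\min\!\left(\frac{\pi}{2}-\phi,\ \ln\!\left(\frac{t^{\delta-1}}{k}\right)\right),$$ and for sufficiently large $R$, $\left|\frac{\partial F}{\partial z}\right|>\frac{\pi}{2}-\phi$.
   Context: $F(z;\lambda):=(1-z)\ln(1-z)+z\ln z+z\ln\lambda$, with branch cuts $(-\infty,0]$ and $[1,\infty)$. *)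

(* Defs.v *)
From Stdlib Require Import Reals.
From Coquelicot Require Import Coquelicot.
Open Scope R_scope.

(* Principal argument Arg z in (-PI, PI] (branch cut along the negative real axis). *)
Definition Arg (z : C) : R :=
  let x := fst z in let y := snd z in
  if Rlt_dec 0 x then atan (y / x)
  else if Rlt_dec x 0 then
    (if Rle_dec 0 y then atan (y / x) + PI else atan (y / x) - PI)
  else (if Rlt_dec 0 y then PI / 2 else if Rlt_dec y 0 then - (PI / 2) else 0).

Definition Clog (z : C) : C := (ln (Cmod z), Arg z).

(* F(z; lambda) = (1-z) ln(1-z) + z ln z + z ln lambda, with principal logs:
   ln z has cut (-oo,0], ln(1-z) has cut [1,oo) in the z-plane. *)
Definition F (lam : R) (z : C) : C :=
  Cplus (Cplus (Cmult (Cminus (RtoC 1) z) (Clog (Cminus (RtoC 1) z)))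
               (Cmult z (Clog z)))
        (Cmult z (RtoC (ln lam))).

Definition contour (k phi R : R) : C :=
  Cplus (RtoC (1 - k)) (Cmult (RtoC R) (cos phi, sin phi)).

(* Main.v *)
Require Import Defs.
From Stdlib Require Import Reals Lra.
From Coquelicot Require Import Coquelicot.
Open Scope R_scope.


Lemma CR_derive (f : C -> C) (x y ux uy vx vy : R) :
  differentiable_pt_lim (fun a b => fst (f (a,b))) x y ux uy ->
  differentiable_pt_lim (fun a b => snd (f (a,b))) x y vx vy ->
  ux = vy -> uy = - vx ->
  @is_derive C_AbsRing C_NormedModule f (x,y) (ux,vx).
Proof.
  intros Hu Hv E1 E2. split.
  - apply is_linear_scal_l.
  - intros z0 Hz0. pose proof (@is_filter_lim_locally_unique C_AbsRing (AbsRing_NormedModule C_AbsRing) (x,y) z0 Hz0) as Hz. subst z0.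
    intros eps.
    assert (He : 0 < eps / 2) by (destruct eps; simpl; lra).
    destruct (Hu (mkposreal _ He)) as [d1 H1].
    destruct (Hv (mkposreal _ He)) as [d2 H2].
    assert (Hd : 0 < Rmin d1 d2) by (destruct d1, d2; apply Rmin_glb_lt; simpl; lra).
    exists (mkposreal _ Hd). intros [a b] Hab.
    change (Cmod (Cminus (a,b) (x,y)) < Rmin d1 d2) in Hab.
    pose proof (Rmax_Cmod (Cminus (a,b) (x,y))) as HH. simpl in HH.
    replace (a + - x) with (a - x) in HH by ring. replace (b + - y) with (b - y) in HH by ring.
    assert (Ha : Rabs (a - x) < Rmin d1 d2) by (eapply Rle_lt_trans; [|exact Hab]; eapply Rle_trans; [apply Rmax_l|exact HH]).
    assert (Hb : Rabs (b - y) < Rmin d1 d2) by (eapply Rle_lt_trans; [|exact Hab]; eapply Rle_trans; [apply Rmax_r|exact HH]).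
    assert (Ha1 : Rabs (a - x) < d1) by (eapply Rlt_le_trans; [exact Ha| apply Rmin_l]).
    assert (Ha2 : Rabs (a - x) < d2) by (eapply Rlt_le_trans; [exact Ha| apply Rmin_r]).
    assert (Hb1 : Rabs (b - y) < d1) by (eapply Rlt_le_trans; [exact Hb| apply Rmin_l]).
    assert (Hb2 : Rabs (b - y) < d2) by (eapply Rlt_le_trans; [exact Hb| apply Rmin_r]).
    specialize (H1 a b Ha1 Hb1). specialize (H2 a b Ha2 Hb2). simpl in H1, H2.
    change (Cmod (Cminus (Cminus (f (a,b)) (f (x,y))) (Cmult (Cminus (a,b) (x,y)) (ux,vx)))
       <= eps * Cmod (Cminus (a,b) (x,y))).
    eapply Rle_trans. apply Cmod_2Rmax.
    set (M := Rmax (Rabs (a - x)) (Rabs (b - y))) in *.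
    assert (Hs : sqrt 2 < 2).
    { rewrite <- (sqrt_Rsqr 2) at 2 by lra. apply sqrt_lt_1; unfold Rsqr; lra. }
    assert (HM0 : 0 <= M) by (unfold M; eapply Rle_trans; [apply Rabs_pos| apply Rmax_l]).
    assert (Hmax : Rmax (Rabs (fst (Cminus (Cminus (f (a, b)) (f (x, y))) (Cmult (Cminus (a, b) (x, y)) (ux, vx)))))
                        (Rabs (snd (Cminus (Cminus (f (a, b)) (f (x, y))) (Cmult (Cminus (a, b) (x, y)) (ux, vx))))) <= eps/2 * M).
    { apply Rmax_lub.
      - simpl. eapply Rle_trans; [|exact H1]. right. f_equal. subst. ring.
      - simpl. eapply Rle_trans; [|exact H2]. right. f_equal. subst. ring. }
    assert (0 < sqrt 2) by (apply sqrt_lt_R0; lra).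
    destruct eps as [e ep]; simpl in *.
    apply Rle_trans with (sqrt 2 * (e/2*M)). apply Rmult_le_compat_l; lra.
    apply Rle_trans with (e * M). assert (0 <= e*M) by nra. nra. apply Rmult_le_compat_l; lra.
Qed.

Lemma Rmax_abs_ge0 a b : 0 <= Rmax (Rabs a) (Rabs b).
Proof. eapply Rle_trans; [apply Rabs_pos|apply Rmax_l]. Qed.

Lemma D_fst x y : differentiable_pt_lim (fun u v => u) x y 1 0.
Proof.
  intros eps. exists eps. intros u v _ _.
  replace (u - x - (1 * (u - x) + 0 * (v - y))) with 0 by ring.
  rewrite Rabs_R0. pose proof (Rmax_abs_ge0 (u-x) (v-y)). destruct eps; simpl; nra.
Qed.

Lemma D_snd x y : differentiable_pt_lim (fun u v => v) x y 0 1.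
Proof.
  intros eps. exists eps. intros u v _ _.
  replace (v - y - (0 * (u - x) + 1 * (v - y))) with 0 by ring.
  rewrite Rabs_R0. pose proof (Rmax_abs_ge0 (u-x) (v-y)). destruct eps; simpl; nra.
Qed.

Lemma D_plus2 x y : differentiable_pt_lim (fun u v => u + v) x y 1 1.
Proof.
  intros eps. exists eps. intros u v _ _.
  replace (u + v - (x + y) - (1 * (u - x) + 1 * (v - y))) with 0 by ring.
  rewrite Rabs_R0. pose proof (Rmax_abs_ge0 (u-x) (v-y)). destruct eps; simpl; nra.
Qed.

Lemma D_mult2 x y : differentiable_pt_lim (fun u v => u * v) x y y x.
Proof.
  intros eps. exists eps. intros u v Hu Hv.
  replace (u * v - x * y - (y * (u - x) + x * (v - y))) with ((u-x)*(v-y)) by ring.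
  rewrite Rabs_mult. 
  assert (H1 : Rabs (u - x) <= Rmax (Rabs (u - x)) (Rabs (v - y))) by apply Rmax_l.
  assert (H2 : Rabs (v - y) <= Rmax (Rabs (u - x)) (Rabs (v - y))) by apply Rmax_r.
  assert (H3 : Rmax (Rabs (u - x)) (Rabs (v - y)) <= eps) by (apply Rmax_lub; lra).
  pose proof (Rabs_pos (u-x)). pose proof (Rabs_pos (v-y)).
  apply Rle_trans with (Rabs (u - x) * Rmax (Rabs (u - x)) (Rabs (v - y))).
  apply Rmult_le_compat_l; lra. apply Rmult_le_compat_r. apply Rmax_abs_ge0. lra.
Qed.

Lemma D_eq f x y lx ly lx' ly' : differentiable_pt_lim f x y lx ly -> lx = lx' -> ly = ly' ->
  differentiable_pt_lim f x y lx' ly'.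
Proof. intros H -> ->. exact H. Qed.

Lemma D_g (g : R -> R) g' f x y fx fy :
  derivable_pt_lim g (f x y) g' -> differentiable_pt_lim f x y fx fy ->
  differentiable_pt_lim (fun u v => g (f u v)) x y (g' * fx) (g' * fy).
Proof.
  intros Hg Hf.
  pose proof (differentiable_pt_lim_comp (fun a b => g a) f f x y g' 0 fx fy fx fy
    (differentiable_pt_lim_proj1_0 g (f x y) (f x y) g' Hg) Hf Hf) as H.
  eapply D_eq. exact H. ring. ring.
Qed.

Lemma D_plus f g x y fx fy gx gy :
  differentiable_pt_lim f x y fx fy -> differentiable_pt_lim g x y gx gy ->
  differentiable_pt_lim (fun u v => f u v + g u v) x y (fx + gx) (fy + gy).
Proof.
  intros Hf Hg.
  pose proof (differentiable_pt_lim_comp (fun a b => a + b) f g x y 1 1 fx fy gx gy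
    (D_plus2 _ _) Hf Hg) as H.
  eapply D_eq. exact H. ring. ring.
Qed.

Lemma D_mult f g x y fx fy gx gy :
  differentiable_pt_lim f x y fx fy -> differentiable_pt_lim g x y gx gy ->
  differentiable_pt_lim (fun u v => f u v * g u v) x y (g x y * fx + f x y * gx) (g x y * fy + f x y * gy).
Proof.
  intros Hf Hg.
  exact (differentiable_pt_lim_comp (fun a b => a * b) f g x y _ _ fx fy gx gy
    (D_mult2 _ _) Hf Hg).
Qed.

Lemma D_re x y : 0 < x^2 + y^2 ->
  differentiable_pt_lim (fun a b => fst (Clog (a,b))) x y (x/(x^2+y^2)) (y/(x^2+y^2)).
Proof.
  intros Hr.
  apply differentiable_pt_lim_ext with (f1 := fun a b => ln (sqrt (a*a + b*b))).
  { exists (mkposreal 1 Rlt_0_1). intros u v _ _. simpl. unfold Clog, Cmod. simpl. f_equal. f_equal. ring. }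
  assert (Hf := D_plus _ _ x y _ _ _ _ (D_mult _ _ x y _ _ _ _ (D_fst x y) (D_fst x y))
                                   (D_mult _ _ x y _ _ _ _ (D_snd x y) (D_snd x y))).
  assert (Hg : derivable_pt_lim (fun s => ln (sqrt s)) (x*x+y*y) (/ (2 * (x*x+y*y)))).
  { assert (Hr' : 0 < x*x+y*y) by (simpl in Hr; nra).
    assert (Hs : 0 < sqrt (x*x+y*y)) by (apply sqrt_lt_R0; lra).
    apply is_derive_Reals. auto_derive. auto.
    replace (2 * (x*x+y*y)) with (2 * (sqrt (x*x+y*y) * sqrt (x*x+y*y))) by (rewrite sqrt_sqrt; lra).
    field. lra. }
  eapply D_eq. exact (D_g _ _ _ x y _ _ Hg Hf). simpl. field. nra. simpl. field. nra.
Qed.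

Lemma D_inv x y : 0 < x -> differentiable_pt_lim (fun a b => / a) x y (- / (x*x)) 0.
Proof.
  intros Hx. assert (Hg : derivable_pt_lim (fun s => / s) x (- / (x*x))).
  { apply is_derive_Reals. auto_derive. lra. field. lra. }
  eapply D_eq. exact (D_g _ _ (fun a b => a) x y _ _ Hg (D_fst x y)). ring. ring.
Qed.

Lemma D_inv2 x y : y < 0 -> differentiable_pt_lim (fun a b => / b) x y 0 (- / (y*y)).
Proof.
  intros Hy. assert (Hg : derivable_pt_lim (fun s => / s) y (- / (y*y))).
  { apply is_derive_Reals. auto_derive. lra. field. lra. }
  eapply D_eq. exact (D_g _ _ (fun a b => b) x y _ _ Hg (D_snd x y)). ring. ring.
Qed.

Lemma D_im1 x y : 0 < x ->
  differentiable_pt_lim (fun a b => snd (Clog (a,b))) x y (- y/(x^2+y^2)) (x/(x^2+y^2)).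
Proof.
  intros Hx.
  apply differentiable_pt_lim_ext with (f1 := fun a b => atan (b * / a)).
  { exists (mkposreal x Hx). intros u v Hu _. simpl in Hu. simpl. unfold Clog, Arg. simpl.
    destruct (Rlt_dec 0 u) as [H|H]. reflexivity. exfalso. apply H. 
    apply Rabs_def2 in Hu. lra. }
  assert (Hf := D_mult _ _ x y _ _ _ _ (D_snd x y) (D_inv x y Hx)).
  eapply D_eq. exact (D_g atan _ _ x y _ _ (derivable_pt_lim_atan _) Hf).
  simpl. field. split; [nra|lra].
  simpl. field. repeat split; try lra; nra.
Qed.

Lemma Arg_neg u v : v < 0 -> Arg (u,v) = - (PI/2) - atan (u * / v).
Proof.
  intros Hv. unfold Arg. simpl.
  destruct (Rlt_dec 0 u) as [Hu|Hu].
  - replace (v / u) with (- / (u * / (- v))) by (field; lra).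
    rewrite atan_opp, atan_inv. replace (u * / - v) with (- (u * / v)) by (field; lra).
    rewrite atan_opp. ring. apply Rmult_lt_0_compat. lra. apply Rinv_0_lt_compat. lra.
  - destruct (Rlt_dec u 0) as [Hu'|Hu'].
    + destruct (Rle_dec 0 v) as [H|H]. lra.
      replace (v / u) with (/ (u * / v)) by (field; lra).
      rewrite atan_inv. lra. 
      replace (u * / v) with ((-u) * / (-v)) by (field; lra).
      apply Rmult_lt_0_compat. lra. apply Rinv_0_lt_compat. lra.
    + assert (u = 0) by lra. subst u.
      destruct (Rlt_dec 0 v). lra. destruct (Rlt_dec v 0). 
      rewrite Rmult_0_l, atan_0. ring. lra.
Qed.

Lemma D_im2 x y : y < 0 ->
  differentiable_pt_lim (fun a b => snd (Clog (a,b))) x y (- y/(x^2+y^2)) (x/(x^2+y^2)).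
Proof.
  intros Hy.
  apply differentiable_pt_lim_ext with (f1 := fun a b => - (PI/2) - atan (a * / b)).
  { assert (Hy' : 0 < - y) by lra.
    exists (mkposreal _ Hy'). intros u v _ Hv. simpl in Hv. simpl. unfold Clog. simpl.
    rewrite Arg_neg. reflexivity. apply Rabs_def2 in Hv. lra. }
  assert (Hf := D_mult _ _ x y _ _ _ _ (D_fst x y) (D_inv2 x y Hy)).
  assert (Hg : derivable_pt_lim (fun s => - (PI/2) - atan s) (x * / y) (- / (1 + (x * / y)^2))).
  { apply is_derive_Reals. auto_derive. auto. simpl. field. repeat split; try lra; nra. }
  eapply D_eq. exact (D_g _ _ _ x y _ _ Hg Hf).
  simpl. field. repeat split; try lra; nra.
  simpl. field. repeat split; try lra; nra.
Qed.

Lemma Clog_derive x y : 0 < x \/ y < 0 ->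
  @is_derive C_AbsRing C_NormedModule Clog (x,y) (Cinv (x,y)).
Proof.
  intros H. assert (Hr : 0 < x^2 + y^2) by (destruct H; nra).
  unfold Cinv; simpl fst; simpl snd.
  apply CR_derive with (uy := y/(x^2+y^2)) (vy := x/(x^2+y^2)).
  - apply D_re; auto.
  - destruct H. apply D_im1; auto. apply D_im2; auto.
  - reflexivity.
  - field. lra.
Qed.

Lemma Clog_derive' w : 0 < fst w \/ snd w < 0 ->
  @is_derive C_AbsRing C_NormedModule Clog w (Cinv w).
Proof. destruct w; apply Clog_derive. Qed.

Lemma conv1 (f : C -> C) x l : @is_derive C_AbsRing (AbsRing_NormedModule C_AbsRing) f x l -> @is_derive C_AbsRing C_NormedModule f x l.
Proof. intros [Hl Hd]; split; [apply is_linear_scal_l|]. intros x0 Hx0 eps. exact (Hd x0 Hx0 eps). Qed.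
Lemma conv2 (f : C -> C) x l : @is_derive C_AbsRing C_NormedModule f x l -> @is_derive C_AbsRing (AbsRing_NormedModule C_AbsRing) f x l.
Proof. intros [Hl Hd]; split; [apply is_linear_scal_l|]. intros x0 Hx0 eps. exact (Hd x0 Hx0 eps). Qed.

Lemma F_derive lam x y : 0 < x -> (0 < 1 - x \/ 0 < y) ->
  @is_derive C_AbsRing C_NormedModule (F lam) (x,y)
    (Cplus (Cminus (Clog (x,y)) (Clog (Cminus (RtoC 1) (x,y)))) (RtoC (ln lam))).
Proof.
  intros Hx Hy.
  set (z := (x,y) : C).
  assert (Hz : z <> 0%C).
  { intro E. injection E. intros. lra. }
  assert (H1z : Cminus (RtoC 1) z <> 0%C).
  { intro E. injection E. intros. simpl in *. lra. }
  pose (V := AbsRing_NormedModule C_AbsRing).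
  assert (Hm := @is_derive_minus C_AbsRing V (fun _ => RtoC 1) (fun w => w) z _ _ (@is_derive_const C_AbsRing V (RtoC 1) z) (@is_derive_id C_AbsRing z)).
  assert (Hl1 := @is_derive_comp C_AbsRing V Clog _ z _ _
           (conv2 _ _ _ (Clog_derive' (Cminus (RtoC 1) z) ltac:(simpl; lra))) Hm).
  assert (Hl0 := conv2 _ _ _ (Clog_derive' z ltac:(simpl; lra))).
  assert (Hid := @is_derive_id C_AbsRing z).
  assert (Hcomm : forall n m : C_AbsRing, mult n m = mult m n) by (intros; apply Cmult_comm).
  assert (HA := @is_derive_mult C_AbsRing _ _ z _ _ Hm Hl1 Hcomm).
  assert (HB := @is_derive_mult C_AbsRing _ _ z _ _ Hid Hl0 Hcomm).
  assert (HC := @is_derive_mult C_AbsRing (fun w => w) (fun _ => RtoC (ln lam)) z _ _ Hid (@is_derive_const C_AbsRing V _ z) Hcomm).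
  assert (HD := @is_derive_plus C_AbsRing V _ _ z _ _ (@is_derive_plus C_AbsRing V _ _ z _ _ HA HB) HC).
  apply conv1 in HD.
  apply (is_derive_ext _ _ _ _ (fun t => eq_refl)) in HD.
  match type of HD with @is_derive _ _ _ _ ?d => replace (Cplus (Cminus (Clog z) (Clog (Cminus (RtoC 1) z))) (RtoC (ln lam))) with d end.
  exact HD.
  assert (Hr : x^2 + y^2 <> 0) by (intro E; nra).
  assert (Hr1 : (1 + - x)^2 + (0 + - y)^2 <> 0) by (intro E; pose proof (pow2_ge_0 (1 + -x)); pose proof (pow2_ge_0 (0 + -y)); destruct Hy; nra).
  unfold z; apply injective_projections; simpl; field; auto.
  all: split; intro E; [apply Hr | apply Hr1]; simpl; lra.
Qed.

Lemma Cmod_ge_im c : Rabs (snd c) <= Cmod c.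
Proof.
  destruct c as [x y]. unfold Cmod; simpl. rewrite <- sqrt_Rsqr_abs.
  apply sqrt_le_1_alt. unfold Rsqr. nra.
Qed.

Lemma Cmod_ge_re c : Rabs (fst c) <= Cmod c.
Proof. apply re_le_Cmod. Qed.

Lemma atan_pos p : 0 < p -> 0 < atan p.
Proof. intros. rewrite <- atan_0. apply atan_increasing. auto. Qed.

Lemma alg_C a k c sn R : a + k = 1 -> 0 < k < a -> 0 < c -> 0 < sn -> c^2 + sn^2 = 1 ->
  R * (a - k) > 2 * a * k * c -> 0 < k - R * c -> 0 < a + R * c ->
  (R*sn/(a+R*c) + R*sn/(k-R*c)) * sn > c * (1 - (R*sn/(a+R*c)) * (R*sn/(k-R*c))).
Proof.
  intros Hak Hk Hc Hs Hcs HR HQ HP.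
  assert (HR0 : 0 < R) by (assert (0 < 2*a*k*c) by (repeat apply Rmult_lt_0_compat; lra); nra).
  assert (E1 : (R*sn/(a+R*c) + R*sn/(k-R*c)) * sn * ((a+R*c)*(k-R*c)) = R * sn^2 * (a + k)) by (field; lra).
  assert (E2 : c * (1 - (R*sn/(a+R*c)) * (R*sn/(k-R*c))) * ((a+R*c)*(k-R*c)) = c * (a*k - R*c*(a-k) - R^2*(c^2+sn^2) + R*c*(1 - a - k)*0)) by (field; lra).
  rewrite Hak, Rmult_1_r in E1. rewrite Hcs in E2.
  apply Rmult_lt_reg_r with ((a+R*c)*(k-R*c)). nra.
  rewrite E1, E2.
  assert (H1 : R * sn^2 >= R * (a - k) * sn^2).
  { assert (0 <= sn^2) by nra. assert (0 <= R * sn^2) by nra.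
    assert (R * sn^2 - R * (a - k) * sn^2 = (R * sn^2) * (2 * k)) by (replace a with (1 - k) by lra; ring).
    assert (0 <= (R * sn^2) * (2 * k)) by (apply Rmult_le_pos; lra). lra. }
  assert (H2 : R * sn^2 + R * c^2 * (a - k) >= R * (a - k)).
  { assert (E : R*(a-k) = R*(a-k)*sn^2 + R*c^2*(a-k)) by (transitivity (R*(a-k)*(c^2+sn^2)); [rewrite Hcs; ring| ring]). lra. }
  assert (H3 : 0 < a*k*c) by (repeat apply Rmult_lt_0_compat; lra).
  assert (0 <= R^2 * c) by (assert (0 <= R^2) by nra; nra).
  nra.
Qed.

Lemma ArgA X Y : X <= 0 -> Y < 0 -> Arg (X,Y) <= - (PI/2).
Proof.
  intros HX HY. unfold Arg; simpl.
  destruct (Rlt_dec 0 X). lra.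
  destruct (Rlt_dec X 0).
  - destruct (Rle_dec 0 Y). lra. pose proof (atan_bound (Y/X)). lra.
  - destruct (Rlt_dec 0 Y). lra. destruct (Rlt_dec Y 0). lra. lra.
Qed.

Lemma ArgP X Y : 0 < X -> Arg (X,Y) = atan (Y/X).
Proof. intros HX. unfold Arg; simpl. destruct (Rlt_dec 0 X). auto. lra. Qed.

Lemma sc phi : cos phi ^ 2 + sin phi ^ 2 = 1.
Proof. pose proof (sin2_cos2 phi). unfold Rsqr in H. simpl. lra. Qed.

Section Key.
Variables (lam s k phi R : R).
Hypotheses (Hs : 2 <= s) (Hl : 1/(s-1) <= lam) (Hk : 0 < k < /s) (Hp : 0 < phi < PI/2) (HR : 0 <= R).

Let c := cos phi.
Let sn := sin phi.
Let x := 1 - k + R * c.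
Let y := R * sn.
Let D := Cplus (Cminus (Clog (x,y)) (Clog (Cminus (RtoC 1) (x,y)))) (RtoC (ln lam)).

Lemma Hc : 0 < c. Proof. apply cos_gt_0; lra. Qed.
Lemma Hsn : 0 < sn. Proof. apply sin_gt_0; pose proof PI2_1; lra. Qed.
Lemma Hks : k * s < 1. Proof. destruct Hk as [Hk1 Hk2]. apply (Rmult_lt_compat_r s) in Hk2; [|lra]. rewrite Rinv_l in Hk2; lra. Qed.
Lemma Hk2 : k < 1/2. Proof. pose proof Hks. destruct Hk. nra. Qed.
Lemma Hx : 0 < x. Proof. unfold x. pose proof Hk2. pose proof Hc. assert (0 <= R * c) by nra. lra. Qed.
Lemma E1 : Cminus (RtoC 1) (x,y) = (k - R * c, - y).
Proof. apply injective_projections; simpl; unfold x; ring. Qed.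
Lemma Dfst : fst D = ln (Cmod (x,y)) - ln (Cmod (k - R*c, - y)) + ln lam.
Proof. unfold D. rewrite E1. simpl. ring. Qed.
Lemma Dsnd : snd D = Arg (x,y) - Arg (k - R*c, - y).
Proof. unfold D. rewrite E1. simpl. ring. Qed.

Lemma partA : k <= R * c -> Cmod D > PI/2 - phi.
Proof.
  intros HA. pose proof Hc. pose proof Hsn. pose proof Hx.
  assert (HR0 : 0 < R) by (destruct Hk; destruct HR as [H'|H']; [auto| subst; nra]).
  assert (Hy : 0 < y) by (unfold y; nra).
  pose proof (Cmod_ge_im D). pose proof (Rle_abs (snd D)).
  rewrite Dsnd in *. rewrite ArgP in * by auto.
  pose proof (atan_pos (y/x) ltac:(apply Rdiv_lt_0_compat; lra)).
  pose proof (ArgA (k - R*c) (-y) ltac:(lra) ltac:(lra)).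
  lra.
Qed.


Lemma partC : R * c < k -> R * ((1-k) - k) > 2 * (1-k) * k * c -> Cmod D > PI/2 - phi.
Proof.
  intros HQ HC. pose proof Hc as Hc'. pose proof Hsn as Hsn'. pose proof Hx as Hx'. pose proof Hk2 as Hk2'.
  assert (HR0 : 0 < R).
  { assert (0 < 2 * (1-k) * k * c) by (repeat apply Rmult_lt_0_compat; lra). destruct Hk.
    destruct HR as [H'|H']; [auto| subst; nra]. }
  assert (Hy : 0 < y) by (unfold y; nra).
  pose proof (Cmod_ge_im D). pose proof (Rle_abs (snd D)).
  rewrite Dsnd in *. rewrite ArgP in * by auto. rewrite ArgP in * by lra.
  replace (- y / (k - R * c)) with (- (y / (k - R*c))) in * by (field; lra).
  rewrite atan_opp in *.
  set (p := y / x) in *. set (q := y / (k - R*c)) in *.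
  assert (Hp0 : 0 < p) by (unfold p; apply Rdiv_lt_0_compat; lra).
  assert (Hq0 : 0 < q) by (unfold q; apply Rdiv_lt_0_compat; lra).
  pose proof (atan_pos p Hp0). pose proof (atan_pos q Hq0).
  assert (Halg : (p + q) * sn > c * (1 - p * q)).
  { unfold p, q, x, y. apply alg_C; try lra. apply sc. unfold x in Hx'; lra. }
  destruct (Rle_lt_dec (atan p + atan q) (PI/2 - phi)) as [Hle|Hlt]; [|lra].
  exfalso.
  assert (HcX : 0 <= cos (atan p + atan q + phi)) by (apply cos_ge_0; lra).
  set (u := sqrt (1 + p²)). set (v := sqrt (1 + q²)).
  assert (Hu : 0 < u) by (apply sqrt_lt_R0; unfold Rsqr; nra).
  assert (Hv : 0 < v) by (apply sqrt_lt_R0; unfold Rsqr; nra).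
  assert (Eq : cos (atan p + atan q + phi) * (u * v) = (1 - p*q) * c - (p + q) * sn).
  { rewrite cos_plus, cos_plus, sin_plus, !cos_atan, !sin_atan. fold u v. fold c sn. field. lra. }
  assert (0 <= cos (atan p + atan q + phi) * (u * v)) by (apply Rmult_le_pos; nra).
  lra.
Qed.

Lemma partB : R * c < k -> R * ((1-k) - k) <= 2 * (1-k) * k * c -> Cmod D > ln (/ s / k).
Proof.
  intros HQ HB. pose proof Hc as Hc'. pose proof Hsn as Hsn'. pose proof Hx as Hx'. pose proof Hk2 as Hk2'.
  pose proof Hks as Hks'. destruct Hk as [Hk0 Hk1].
  pose proof (Cmod_ge_re D). pose proof (Rle_abs (fst D)).
  rewrite Dfst in *.
  set (A := Cmod (x,y)) in *. set (B := Cmod (k - R * c, - y)) in *.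
  assert (HA2 : A^2 = x^2 + y^2) by (unfold A; rewrite Cmod2_alt; reflexivity).
  assert (HB2 : B^2 = (k - R*c)^2 + y^2) by (unfold B; rewrite Cmod2_alt; simpl; ring).
  assert (HA0 : 0 < A) by (unfold A; apply Cmod_gt_0; intro E; injection E; lra).
  assert (HB0 : 0 < B) by (unfold B; apply Cmod_gt_0; intro E; injection E; lra).
  assert (Hdiff : (k*A)^2 - ((1-k)*B)^2 = R * (2 * (1-k) * k * c - R * ((1-k) - k))).
  { transitivity (k^2 * A^2 - (1-k)^2 * B^2). ring. rewrite HA2, HB2. unfold x, y.
    transitivity (R * (2 * (1-k) * k * c - R * ((1-k) - k) * (c^2 + sn^2))). ring.
    assert (Hcs : c^2 + sn^2 = 1) by apply sc. rewrite Hcs. ring. }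
  assert (Hkey : (1-k) * B <= k * A).
  { destruct (Rle_lt_dec ((1-k)*B) (k*A)) as [H'|H']; auto. exfalso.
    assert (0 <= R * (2 * (1-k) * k * c - R * ((1-k) - k))) by (apply Rmult_le_pos; lra).
    assert (0 < k * A) by nra. nra. }
  assert (Hs1 : 0 < s - 1) by lra.
  assert (Hlam1 : 1 <= lam * (s - 1)).
  { apply (Rmult_le_compat_r (s-1)) in Hl; [|lra]. replace (1 / (s-1) * (s-1)) with 1 in Hl by (field; lra). lra. }
  assert (Hlam0 : 0 < lam) by nra.
  assert (Hlsa : 1 < lam * s * (1 - k)).
  { assert (lam * s * (1-k) - lam * (s-1) = lam * (1 - k * s)) by ring.
    assert (0 < lam * (1 - k*s)) by (apply Rmult_lt_0_compat; lra). lra. }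
  assert (Hmain : B * (/ s / k) < lam * A).
  { assert (B < lam * A * (s * k)).
    { apply Rlt_le_trans with (lam * s * ((1-k) * B)). nra.
      replace (lam * A * (s * k)) with (lam * s * (k * A)) by ring.
      apply Rmult_le_compat_l. nra. auto. }
    apply Rmult_lt_reg_r with (s * k). nra.
    replace (B * (/ s / k) * (s * k)) with B by (field; lra). auto. }
  assert (Hpos : 0 < B * (/ s / k)).
  { apply Rmult_lt_0_compat; auto. apply Rdiv_lt_0_compat; auto. apply Rinv_0_lt_compat; lra. }
  pose proof (ln_increasing _ _ Hpos Hmain).
  rewrite ln_mult in H1 by (auto; apply Rdiv_lt_0_compat; auto; apply Rinv_0_lt_compat; lra).
  rewrite ln_mult in H1 by auto.
  lra.
Qed.

Lemma key_all : Cmod D > Rmin (PI/2 - phi) (ln (/ s / k)).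
Proof.
  destruct (Rle_lt_dec k (R * c)) as [HA|HA].
  - pose proof (partA HA). pose proof (Rmin_l (PI/2 - phi) (ln (/ s / k))). lra.
  - destruct (Rle_lt_dec (R * ((1-k) - k)) (2 * (1-k) * k * c)) as [HB|HB].
    + pose proof (partB HA HB). pose proof (Rmin_r (PI/2 - phi) (ln (/ s / k))). lra.
    + pose proof (partC HA HB). pose proof (Rmin_l (PI/2 - phi) (ln (/ s / k))). lra.
Qed.

End Key.

Lemma contour_eq k phi R : contour k phi R = (1 - k + R * cos phi, R * sin phi).
Proof. unfold contour. apply injective_projections; simpl; ring. Qed.

Theorem lemma4p1 (delta t lam k phi : R) :
  0 < delta < 1 -> 1 < t ->
  1 / (Rpower t (1 - delta) - 1) <= lam ->
  lam <= Rpower t (1 - delta) - 1 ->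
  0 < k < Rpower t (delta - 1) ->
  (0 <= ln lam -> 0 < phi < PI / 2) ->
  (ln lam < 0 -> 0 < phi < atan (PI / Rabs (ln lam))) ->
  (forall R : R, 0 <= R ->
     exists d : C, @is_derive C_AbsRing C_NormedModule (F lam) (contour k phi R) d /\
       Cmod d > Rmin (PI / 2 - phi) (ln (Rpower t (delta - 1) / k)))
  /\
  (exists R0 : R, forall R : R, R0 <= R ->
     exists d : C, @is_derive C_AbsRing C_NormedModule (F lam) (contour k phi R) d /\
       Cmod d > PI / 2 - phi).
Proof.
  intros Hd Ht Hl1 Hl2 Hk Hp1 Hp2.
  assert (Hinv : Rpower t (delta - 1) = / Rpower t (1 - delta)).
  { replace (delta - 1) with (- (1 - delta)) by ring. apply Rpower_Ropp. }
  rewrite Hinv in *.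
  set (s := Rpower t (1 - delta)) in *.
  assert (Hs1 : 1 < s).
  { unfold s. assert (H0 : Rpower t 0 < Rpower t (1 - delta)) by (apply Rpower_lt; lra). rewrite Rpower_O in H0 by lra. exact H0. }
  assert (Hs : 2 <= s).
  { assert (H1 : 1 / (s - 1) <= s - 1) by lra.
    apply (Rmult_le_compat_r (s-1)) in H1; [|lra].
    replace (1 / (s-1) * (s-1)) with 1 in H1 by (field; lra). nra. }
  assert (Hp : 0 < phi < PI / 2).
  { destruct (Rle_lt_dec 0 (ln lam)) as [H|H]. auto.
    destruct (Hp2 H). pose proof (atan_bound (PI / Rabs (ln lam))). lra. }
  assert (Hc : 0 < cos phi) by (apply cos_gt_0; lra).
  assert (Hsn : 0 < sin phi) by (apply sin_gt_0; pose proof PI2_1; lra).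
  assert (Hks : k * s < 1).
  { destruct Hk as [Hk1 Hk2]. apply (Rmult_lt_compat_r s) in Hk2; [|lra]. rewrite Rinv_l in Hk2; lra. }
  assert (Hder : forall R, 0 <= R -> @is_derive C_AbsRing C_NormedModule (F lam) (contour k phi R)
     (Cplus (Cminus (Clog (1 - k + R * cos phi, R * sin phi)) (Clog (Cminus (RtoC 1) (1 - k + R * cos phi, R * sin phi)))) (RtoC (ln lam)))).
  { intros R HR. rewrite contour_eq. apply F_derive.
    - assert (0 <= R * cos phi) by nra. nra.
    - destruct HR as [HR|HR]. right. nra. left. subst. destruct Hk. nra. }
  split.
  - intros R HR. eexists. split. apply Hder; auto.
    apply key_all; auto.
  - exists (k / cos phi). intros R HR.
    assert (HRc : k <= R * cos phi).
    { apply (Rmult_le_compat_r (cos phi)) in HR; [|lra].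
      replace (k / cos phi * cos phi) with k in HR by (field; lra). lra. }
    assert (HR0 : 0 <= R).
    { destruct Hk. destruct (Rle_lt_dec 0 R); auto. nra. }
    eexists. split. apply Hder; auto.
    apply (partA lam s k phi R); auto.
Qed.
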